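(* For all $\varepsilon>0$ there exist $c,n_0\in\mathbb{N}$ such that for all primes $p\ge n_0$ the following holds. If $\delta\ge c/\log p$ (with $p^\delta$ an integer), $\mu>0$ and $r=\mu n$ is a positive integer, then every proper $(r,p^{\delta})$-GAP $X\subseteq\mathbb{Z}_p^n$ is a $(\mu n/p^{0.9\delta},\,0.1,\,\varepsilon)$-additive source of entropy rate $\delta\mu$ in $(\mathbb{Z}_p^n,+)$.
   Context: An $(r,s)$-GAP in $\mathbb{Z}_p^n$ is a set $\{b_0+\sum_{i=1}^r a_ib_i: a_i\in\mathbb{Z},\ 0\le a_i\le s-1\}$ with $b_0,\dots,b_r\in\mathbb{Z}_p^n$; proper means all $s^r$ sums are distinct. For $X\subseteq\mathbb{Z}_p^n$, $\mathrm{Sym}_{1-\alpha}(X)=\{g:|X\cap(X+g)|\ge(1-\alpha)|X|\}$, and $X$ is $(\alpha,\beta,\tau)$-additive if $|X+X|\le|X|^{1+\tau}$ and $|\mathrm{Sym}_{1-\alpha}(X)|\ge|X|^{\beta}$. Entropy rate $\delta'$ means $|X|\ge p^{\delta' n}$. *)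

(* Defs.v *)
From Stdlib Require Import Reals.
From mathcomp Require Import all_boot all_algebra.
Set Implicit Arguments. Unset Strict Implicit. Unset Printing Implicit Defensive.
Import GRing.Theory.

Notation vecp p n := 'rV['F_p]_n.

Local Open Scope ring_scope.

Definition gap_map (p n r s : nat) (b0 : vecp p n) (b : 'I_r -> vecp p n)
  (a : {ffun 'I_r -> 'I_s}) : vecp p n :=
  b0 + \sum_(i < r) (b i *+ (a i : nat)).

Definition GAP (p n r s : nat) (b0 : vecp p n) (b : 'I_r -> vecp p n)
  : {set vecp p n} :=
  [set gap_map b0 b a | a : {ffun 'I_r -> 'I_s}].

Definition proper_GAP (p n r s : nat) (b0 : vecp p n) (b : 'I_r -> vecp p n) :
  Prop := injective (@gap_map p n r s b0 b).

Definition sumset (p n : nat) (X : {set vecp p n}) : {set vecp p n} :=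
  [set x + y | x in X, y in X].

Definition shift (p n : nat) (X : {set vecp p n}) (g : vecp p n) : {set vecp p n} :=
  [set x + g | x in X].

Local Close Scope ring_scope.
Local Open Scope R_scope.

Definition Sym (p n : nat) (alpha : R) (X : {set vecp p n}) : {set vecp p n} :=
  [set g | if Rle_dec ((1 - alpha) * INR #|X|) (INR #|X :&: shift X g|) then true else false].

Definition additive (p n : nat) (alpha beta tau : R) (X : {set vecp p n}) : Prop :=
  INR #|sumset X| <= Rpower (INR #|X|) (1 + tau) /\
  Rpower (INR #|X|) beta <= INR #|Sym alpha X|.

Definition entropy_rate (p n : nat) (d : R) (X : {set vecp p n}) : Prop :=
  Rpower (INR p) (d * INR n) <= INR #|X|.

Arguments GAP {p n r} s b0 b.
Arguments proper_GAP {p n r} s b0 b.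

(* Main.v *)
Require Import Defs.
From Stdlib Require Import Reals Lra. From Stdlib Require ZArith.
From mathcomp Require Import all_boot all_algebra.
From mathcomp Require Import zify.
Set Implicit Arguments. Unset Strict Implicit. Unset Printing Implicit Defensive.
Section Comb.
Import GRing.Theory.
Local Open Scope ring_scope.
Variables (p n r s : nat) (b0 : 'rV['F_p]_n) (b : 'I_r -> 'rV['F_p]_n).

Lemma card_GAP : proper_GAP s b0 b -> #|GAP s b0 b| = (s ^ r)%N.
Proof.
move=> inj; rewrite /GAP card_imset // card_ffun !card_ord //.
Qed.

Lemma addo_proof (x y : 'I_s) : (x + y < s + s)%N.
Proof. have := ltn_ord x; have := ltn_ord y; lia. Qed.
Definition addo (x y : 'I_s) : 'I_(s + s) := Ordinal (addo_proof x y).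

Lemma card_sumset : (#|sumset (GAP s b0 b)| <= (s + s) ^ r)%N.
Proof.
pose H (c : {ffun 'I_r -> 'I_(s+s)}) := (b0 + b0) + \sum_(i < r) (b i *+ (c i : nat)).
apply: (@leq_trans #|[set H c | c : {ffun 'I_r -> 'I_(s+s)}]|).
  apply: subset_leq_card; apply/subsetP => z /imset2P [x y /imsetP[a _ ->] /imsetP[a' _ ->] ->].
  apply/imsetP; exists [ffun i => addo (a i) (a' i)] => //.
  rewrite /H /gap_map.
  under [X in _ = _ + X]eq_bigr => i _ do rewrite ffunE /= mulrnDr.
  rewrite big_split /=. rewrite -!addrA; congr (_ + _); rewrite addrC -!addrA; congr (_ + _); by rewrite addrC.
apply: leq_trans (leq_imset_card _ _) _.
by rewrite card_ffun !card_ord.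
Qed.

Variable t : nat.
Hypothesis Hts : (t < s)%N.

Lemma addo2_proof (x : 'I_(s - t)) (y : 'I_t.+1) : (x + y < s)%N.
Proof. have := ltn_ord x; have := ltn_ord y; lia. Qed.
Definition addo2 x y : 'I_s := Ordinal (addo2_proof x y).

Definition Gfun (d : {ffun 'I_r -> 'I_t.+1}) : 'rV['F_p]_n := \sum_(i < r) (b i *+ (d i : nat)).

Lemma sym_part : proper_GAP s b0 b ->
  #|[set Gfun d | d : {ffun 'I_r -> 'I_t.+1}]| = (t.+1 ^ r)%N /\
  forall g, g \in [set Gfun d | d : {ffun 'I_r -> 'I_t.+1}] ->
    ((s - t) ^ r <= #|GAP s b0 b :&: shift (GAP s b0 b) g|)%N.
Proof.
move=> inj; split.
  rewrite card_imset; first by rewrite card_ffun !card_ord.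
  move=> d d' /(congr1 (fun v => b0 + v)) E.
  have := inj [ffun i => widen_ord Hts (d i)] [ffun i => widen_ord Hts (d' i)].
  rewrite /gap_map.
  under eq_bigr => i _ do rewrite ffunE /=.
  under [X in _ = _ + X -> _]eq_bigr => i _ do rewrite ffunE /=.
  move=> /(_ E) /ffunP E'; apply/ffunP => i; have := E' i; rewrite !ffunE.
  by move/(congr1 val) => /= /val_inj.
move=> g /imsetP [d _ ->].
pose F (a : {ffun 'I_r -> 'I_(s - t)}) := gap_map b0 b [ffun i => addo2 (a i) (d i)].
have -> : ((s - t) ^ r)%N = #|[set F a | a : {ffun 'I_r -> 'I_(s - t)}]|.
  rewrite card_imset; first by rewrite card_ffun !card_ord.
  move=> a a' /inj /ffunP E; apply/ffunP => i; have := E i; rewrite !ffunE.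
  move/(congr1 val) => /= /eqP; rewrite eqn_add2r => /eqP; exact: val_inj.
apply: subset_leq_card; apply/subsetP => z /imsetP [a _ ->]; rewrite inE; apply/andP; split.
  by apply/imsetP; exists [ffun i => addo2 (a i) (d i)].
apply/imsetP; exists (gap_map b0 b [ffun i => widen_ord (leq_subr t s) (a i)]).
  by apply/imsetP; exists [ffun i => widen_ord (leq_subr t s) (a i)].
rewrite /F /gap_map /Gfun -addrA; congr (_ + _).
rewrite -big_split /=; apply: eq_bigr => i _; by rewrite !ffunE /= mulrnDr.
Qed.
End Comb.

Unset Implicit Arguments.
Local Open Scope R_scope.

Lemma INR_expn (m k : nat) : INR (m ^ k)%N = INR m ^ k.
Proof. elim: k => [|k IH] //=. rewrite expnS. change (m * m ^ k)%N with (Nat.mul m (m ^ k)%N).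
rewrite mult_INR IH //. Qed.

Lemma bern (x : R) (k : nat) : 0 <= x <= 1 -> 1 - INR k * x <= (1 - x) ^ k.
Proof. move=> [h0 h1]; elim: k => [|k IH]; first (simpl; lra).
rewrite S_INR /=. have: 0 <= 1 - x by lra. move=> h. have := pos_INR k. have := Rmult_le_compat_l _ _ _ h IH. nra. Qed.

Lemma div_le1 (a c : R) : 0 < c -> a <= c -> a / c <= 1.
Proof. move=> hc hab; apply: (Rmult_le_reg_r c) => //; rewrite /Rdiv Rmult_assoc Rinv_l; lra. Qed.
Lemma div_ge0 (a c : R) : 0 < c -> 0 <= a -> 0 <= a / c.
Proof. move=> hc ha; apply: Rmult_le_pos => //; apply: Rlt_le; exact: Rinv_0_lt_compat. Qed.

Theorem lemma4p1 :
  forall eps : R, 0 < eps ->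
  exists c n0 : nat,
  forall p : nat, prime p -> (n0 <= p)%N ->
  forall (n : nat) (delta mu : R) (s r : nat),
    INR c / ln (INR p) <= delta ->
    INR s = Rpower (INR p) delta ->
    0 < mu ->
    (0 < r)%N -> INR r = mu * INR n ->
    forall (b0 : 'rV['F_p]_n) (b : 'I_r -> 'rV['F_p]_n),
      proper_GAP s b0 b ->
      additive (mu * INR n / Rpower (INR p) (9/10 * delta)) (1/10) eps
               (GAP s b0 b) /\
      entropy_rate (delta * mu) (GAP s b0 b).
Proof.
move=> eps heps.
have [hup _] := archimed (/ eps).
have hinv : 0 < / eps by apply: Rinv_0_lt_compat.
have hup0 : BinInt.Z.le 0 (up (/ eps)) by apply: le_IZR; lra.
exists (Z.to_nat (up (/ eps))), 2%N => p pp _ n delta mu s r hc hs hmu hr hrn b0 b inj.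
have hc' : / eps < INR (Z.to_nat (up (/ eps))) by rewrite INR_IZR_INZ Znat.Z2Nat.id.
have hp : 2 <= INR p by apply: (le_INR 2); apply/leP; exact: prime_gt1.
have lnp : 0 < ln (INR p) by rewrite -ln_1; apply: ln_increasing; lra.
have hdl : / eps <= delta * ln (INR p).
  have := Rmult_le_compat_r _ _ _ (Rlt_le _ _ lnp) hc.
  rewrite /Rdiv Rmult_assoc Rinv_l; lra.
have hdpos : 0 < delta * ln (INR p) by lra.
set S := INR s in hs *.
have hsS : INR s = S by [].
clearbody S.
have hSe : S = exp (delta * ln (INR p)) := hs.
have hS1 : 1 < S by rewrite hSe; have := exp_ineq1 _ (Rgt_not_eq _ _ hdpos); lra.
have hS0 : 0 < S by lra.
have lnS : ln S = delta * ln (INR p) by rewrite hSe ln_exp.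
have hcard := card_GAP inj.
have hX : INR #|GAP s b0 b| = S ^ r by rewrite hcard INR_expn hsS.
have hSr : Rpower S (INR r) = S ^ r by apply: Rpower_pow.
split; last first.
  rewrite /entropy_rate hX -hSr hs Rpower_mult Rmult_assoc -hrn; lra.
split.
- rewrite hX.
  have h1 : INR #|sumset (GAP s b0 b)| <= (2 * S) ^ r.
    have := @card_sumset p n r s b0 b => /leP /le_INR; rewrite INR_expn plus_INR.
    by rewrite (_ : 2 * S = INR s + INR s) //; lra.
  apply: (Rle_trans _ _ _ h1).
  rewrite -hSr Rpower_mult Rmult_plus_distr_l Rmult_1_r Rpower_plus hSr.
  rewrite (Rmult_comm (INR r)) -Rpower_mult Rpower_pow; last by rewrite /Rpower; apply: exp_pos.
  rewrite Rpow_mult_distr Rmult_comm; apply: Rmult_le_compat_l; first by apply: pow_le; lra.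
  apply: pow_incr; split; first lra.
  rewrite /Rpower lnS.
  have h2 : 1 <= eps * (delta * ln (INR p)).
    have := Rmult_le_compat_l _ _ _ (Rlt_le _ _ heps) hdl; rewrite Rinv_r; lra.
  have h3 : 2 < exp 1 by have := exp_ineq1 1 R1_neq_R0; lra.
  case: (Rle_lt_or_eq_dec _ _ h2) => h4; last by rewrite -h4; lra.
  have := exp_increasing _ _ h4; lra.
-
  set y := Rpower S (1/10).
  set z := Rpower S (9/10).
  have hy0 : 0 < y by rewrite /y /Rpower; apply: exp_pos.
  have hz0 : 0 < z by rewrite /z /Rpower; apply: exp_pos.
  have hyz : S = y * z by rewrite /y /z -Rpower_plus -{1}(Rpower_1 S hS0); congr Rpower; lra.
  have hyS : y < S by rewrite /y -{2}(Rpower_1 S hS0); apply: Rpower_lt; lra.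
  have [hI1 hI2] := base_Int_part y.
  have hI0 : BinInt.Z.le 0 (Int_part y).
    have h : BinInt.Z.lt (Zneg xH) (Int_part y) by apply: lt_IZR; rewrite [IZR (Zneg xH)]/=; lra.
    move: h; lia.
  set t := Z.to_nat (Int_part y).
  have ht : INR t = IZR (Int_part y) by rewrite /t INR_IZR_INZ Znat.Z2Nat.id.
  have hts : (t < s)%N by apply/ltP; apply: INR_lt; rewrite hsS; lra.
  have [hT hTg] := @sym_part p n r s b0 b t hts inj.
  have key : (1 - mu * INR n / Rpower (INR p) (9 / 10 * delta)) * INR #|GAP s b0 b|
      <= INR ((s - t) ^ r)%N.
    rewrite INR_expn minus_INR; last by apply/leP; exact: ltnW.
    rewrite hX -hrn hsS.
    have -> : Rpower (INR p) (9 / 10 * delta) = z by rewrite /z hs Rpower_mult; congr Rpower; lra.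
    have hx : 0 <= INR t / S <= 1.
      split; first by apply: div_ge0; [lra | apply: pos_INR].
      apply: div_le1; lra.
    have hb := bern _ r hx.
    have -> : S - INR t = S * (1 - INR t / S) by field; lra.
    rewrite Rpow_mult_distr (Rmult_comm (1 - _)); apply: Rmult_le_compat_l; first by apply: pow_le; lra.
    apply: Rle_trans hb; apply: Rplus_le_compat_l; apply: Ropp_le_contravar.
    apply: Rmult_le_compat_l; first by apply: pos_INR.
    rewrite hyz /Rdiv Rinv_mult -Rmult_assoc; rewrite -{2}(Rmult_1_l (/ z)).
    apply: Rmult_le_compat_r; first by apply: Rlt_le; apply: Rinv_0_lt_compat.
    rewrite -ht in hI1; apply: div_le1; lra.
  have hsub : [set Gfun b d | d : {ffun 'I_r -> 'I_t.+1}] \subset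
              Sym (mu * INR n / Rpower (INR p) (9 / 10 * delta)) (GAP s b0 b).
    apply/subsetP => g hg; rewrite inE.
    case: Rle_dec => // hn; exfalso; apply: hn.
    apply: Rle_trans key _; apply: le_INR; apply/leP; exact: hTg.
  have := subset_leq_card hsub => /leP /le_INR; rewrite hT INR_expn S_INR.
  apply: Rle_trans.
  rewrite hX -hSr Rpower_mult Rmult_comm -Rpower_mult -/y Rpower_pow //.
  apply: pow_incr; rewrite ht; lra.
Qed.
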